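(* Let $T$ be a completely non-unitary contraction on a separable infinite-dimensional complex Hilbert space $\mathcal{H}$ which is not an isometry, and suppose $\mathcal{D}_T\subseteq\mathcal{D}_{T^*}$ and $\dim\mathcal{D}_{T^*}<\infty$. Then $T$ is analytic if and only if $T$ has no non-zero eigenvalue.
   Context: For a contraction $T$ on $\mathcal{H}$, $\mathcal{D}_T=\overline{(I-T^*T)^{1/2}\mathcal{H}}$ and $\mathcal{D}_{T^*}=\overline{(I-TT^* )^{1/2}\mathcal{H}}$. A contraction is completely non-unitary if it has no nonzero reducing subspace on which it is unitary. $T$ is analytic if $\bigcap_{m\ge1}T^m\mathcal{H}=\{0\}$. *)

(* Defs.v *)
From mathcomp Require Import all_boot all_order all_algebra.
From mathcomp Require Import reals complex.
Set Implicit Arguments. Unset Strict Implicit. Unset Printing Implicit Defensive.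
Import Order.TTheory GRing.Theory Num.Theory.
Local Open Scope ring_scope.
Local Open Scope complex_scope.

Section Hilbert.
Variables (R : realType) (H : lmodType R[i]) (ip : H -> H -> R[i]).

Definition nrm2 (x : H) : R[i] := ip x x.

Definition cauchy_seq (u : nat -> H) : Prop :=
  forall e : R[i], 0 < e -> exists N : nat, forall m n : nat,
    (N <= m)%N -> (N <= n)%N -> nrm2 (u m - u n) < e.

Definition seq_converges (u : nat -> H) (l : H) : Prop :=
  forall e : R[i], 0 < e -> exists N : nat, forall n : nat,
    (N <= n)%N -> nrm2 (u n - l) < e.

Record hs_hilbert : Prop := {
  ip_addl : forall x y z, ip (x + y) z = ip x z + ip y z;
  ip_scalel : forall (a : R[i]) x y, ip (a *: x) y = a * ip x y;
  ip_conj : forall x y, ip y x = (ip x y)^*;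
  ip_ge0 : forall x, 0 <= ip x x;
  ip_def : forall x, ip x x = 0 -> x = 0;
  ip_complete : forall u, cauchy_seq u -> exists l, seq_converges u l }.

Definition in_span (s : seq H) (x : H) : Prop :=
  exists c : nat -> R[i], x = \sum_(k < size s) c k *: s`_k.

Definition hs_separable : Prop :=
  exists u : nat -> H, forall y e, 0 < e -> exists n, nrm2 (u n - y) < e.

Definition hs_infinite_dim : Prop :=
  ~ exists s : seq H, forall x, in_span s x.

Definition hs_finite_dim (M : H -> Prop) : Prop :=
  exists s : seq H, forall x, M x -> in_span s x.

Definition bounded_linear (T : H -> H) : Prop :=
  (forall (a : R[i]) x y, T (a *: x + y) = a *: T x + T y) /\
  exists K : R[i], forall x, nrm2 (T x) <= K * nrm2 x.

Definition is_adjoint (T Ts : H -> H) : Prop :=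
  forall x y, ip (T x) y = ip x (Ts y).

Definition hs_contraction (T : H -> H) : Prop :=
  bounded_linear T /\ forall x, nrm2 (T x) <= nrm2 x.

Definition hs_isometry (T : H -> H) : Prop := forall x, nrm2 (T x) = nrm2 x.

Definition positive_op (S : H -> H) : Prop :=
  bounded_linear S /\ is_adjoint S S /\ forall x, 0 <= ip (S x) x.

Definition is_pos_sqrt (S A : H -> H) : Prop :=
  positive_op S /\ forall x, S (S x) = A x.

Definition closure_range (S : H -> H) (y : H) : Prop :=
  forall e : R[i], 0 < e -> exists x, nrm2 (S x - y) < e.

Definition closed_subspace (M : H -> Prop) : Prop :=
  [/\ M 0, (forall x y, M x -> M y -> M (x + y)),
      (forall (a : R[i]) x, M x -> M (a *: x)) &
      (forall u l, (forall n, M (u n)) -> seq_converges u l -> M l)].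

Definition reducing (T Ts : H -> H) (M : H -> Prop) : Prop :=
  closed_subspace M /\ (forall x, M x -> M (T x)) /\ (forall x, M x -> M (Ts x)).

Definition unitary_on (T : H -> H) (M : H -> Prop) : Prop :=
  (forall x, M x -> nrm2 (T x) = nrm2 x) /\
  (forall y, M y -> exists x, M x /\ T x = y).

Definition completely_non_unitary (T Ts : H -> H) : Prop :=
  forall M : H -> Prop, reducing T Ts M -> unitary_on T M -> forall x, M x -> x = 0.

Definition analytic (T : H -> H) : Prop :=
  forall x, (forall m : nat, (1 <= m)%N -> exists y, x = iter m T y) -> x = 0.

Definition has_nonzero_eigenvalue (T : H -> H) : Prop :=
  exists lam : R[i], lam != 0 /\ exists x, x != 0 /\ T x = lam *: x.

End Hilbert.

(* Main.v *)
Require Import Defs.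
From mathcomp Require Import all_boot all_order all_algebra.
From mathcomp Require Import reals complex.
From mathcomp Require Import ring zify.
From Stdlib Require Import ClassicalEpsilon Classical.
Import Order.TTheory GRing.Theory Num.Theory.
Local Open Scope ring_scope.
Local Open Scope complex_scope.
Set Implicit Arguments. Unset Strict Implicit. Unset Printing Implicit Defensive.

Section Lin.
Variables (R : realType) (H : lmodType R[i]).
Definition lin (f : H -> H) := forall (a : R[i]) x y, f (a *: x + y) = a *: f x + f y.

Section LinF.
Variable f : H -> H.
Hypothesis hf : lin f.
Lemma lin0 : f 0 = 0.
Proof.
have := hf 1 0 0; rewrite scaler0 add0r scale1r => h.
by apply: (@addrI _ (f 0)); rewrite addr0 -{1}h.
Qed.
Lemma linD x y : f (x + y) = f x + f y.
Proof. by have := hf 1 x y; rewrite !scale1r. Qed.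
Lemma linZ a x : f (a *: x) = a *: f x.
Proof. by have := hf a x 0; rewrite !addr0 lin0 addr0. Qed.
Lemma linN x : f (- x) = - f x.
Proof. by rewrite -scaleN1r linZ scaleN1r. Qed.
Lemma linB x y : f (x - y) = f x - f y.
Proof. by rewrite linD linN. Qed.
Lemma lin_sum m (F : 'I_m -> H) : f (\sum_(i < m) F i) = \sum_(i < m) f (F i).
Proof. exact: (big_morph f linD lin0). Qed.
End LinF.

Lemma lin_iter f j : lin f -> lin (iter j f).
Proof.
move=> hf; elim: j => [|j IH] a x y /=; first by [].
by rewrite IH hf.
Qed.
End Lin.

Section Hil.
Variables (R : realType) (H : lmodType R[i]) (ip : H -> H -> R[i]).
Hypothesis hH : hs_hilbert ip.

Lemma conjcD (x y : R[i]) : conjc (x + y) = conjc x + conjc y. Proof. exact: rmorphD. Qed.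
Lemma conjcM (x y : R[i]) : conjc (x * y) = conjc x * conjc y. Proof. exact: rmorphM. Qed.
Lemma conjcN (x : R[i]) : conjc (- x) = - conjc x. Proof. exact: rmorphN. Qed.
Lemma ipDl x y z : ip (x + y) z = ip x z + ip y z. Proof. exact: ip_addl. Qed.
Lemma ipZl a x y : ip (a *: x) y = a * ip x y. Proof. exact: ip_scalel. Qed.
Lemma ipC x y : ip y x = conjc (ip x y). Proof. exact: ip_conj. Qed.
Lemma ipDr x y z : ip x (y + z) = ip x y + ip x z.
Proof. by rewrite ipC ipDl conjcD -!ipC. Qed.
Lemma ipZr a x y : ip x (a *: y) = conjc a * ip x y.
Proof. by rewrite ipC ipZl conjcM -ipC. Qed.
Lemma ip0l y : ip 0 y = 0.
Proof. by rewrite -(scale0r (0 : H)) ipZl mul0r. Qed.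
Lemma ip0r y : ip y 0 = 0.
Proof. by rewrite ipC ip0l conjc0. Qed.
Lemma ipNl x y : ip (- x) y = - ip x y.
Proof. by rewrite -scaleN1r ipZl mulN1r. Qed.
Lemma ipNr x y : ip x (- y) = - ip x y.
Proof. by rewrite ipC ipNl conjcN -ipC. Qed.
Lemma ipBl x y z : ip (x - y) z = ip x z - ip y z.
Proof. by rewrite ipDl ipNl. Qed.
Lemma ipBr x y z : ip x (y - z) = ip x y - ip x z.
Proof. by rewrite ipDr ipNr. Qed.
Lemma ip_ge0' x : 0 <= ip x x. Proof. exact: ip_ge0. Qed.
Lemma ip_eq0 x : ip x x = 0 -> x = 0. Proof. exact: ip_def. Qed.
Lemma ipJ x : conjc (ip x x) = ip x x. Proof. by rewrite -ipC. Qed.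

Lemma eq0_ipr d : (forall z, ip z d = 0) -> d = 0.
Proof. by move=> h; apply: ip_eq0; apply: h. Qed.
Lemma eq0_ipl d : (forall z, ip d z = 0) -> d = 0.
Proof. by move=> h; apply: ip_eq0; apply: h. Qed.

Lemma nrm2N x : nrm2 ip (- x) = nrm2 ip x.
Proof. by rewrite /nrm2 ipNl ipNr opprK. Qed.
Lemma nrm2_subC x y : nrm2 ip (x - y) = nrm2 ip (y - x).
Proof. by rewrite -nrm2N opprB. Qed.

Lemma small0 d : (forall e : R[i], 0 < e -> nrm2 ip d < e) -> d = 0.
Proof.
move=> h; apply: ip_eq0; have [//|hne] := eqVneq (ip d d) 0.
have hp : 0 < ip d d by rewrite lt_def hne ip_ge0'.
by have := h _ hp; rewrite /nrm2 ltxx.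
Qed.

Lemma par x y : nrm2 ip (x + y) <= 2%:R * nrm2 ip x + 2%:R * nrm2 ip y.
Proof.
have E : nrm2 ip (x + y) + nrm2 ip (x - y) = 2%:R * nrm2 ip x + 2%:R * nrm2 ip y.
  rewrite /nrm2 !(ipDl, ipDr, ipNl, ipNr). ring.
by rewrite -E lerDl ip_ge0'.
Qed.

Lemma CS a w : ip a w * ip w a <= nrm2 ip a * nrm2 ip w.
Proof.
have [->|na0] := eqVneq a 0; first by rewrite /nrm2 !ip0l ip0r !mul0r.
have aa0 : ip a a != 0 by apply/negP => /eqP /ip_eq0 /eqP; rewrite (negPf na0).
have aapos : 0 < ip a a by rewrite lt_def aa0 ip_ge0'.
set t := ip w a / ip a a.
have tJ : conjc t = ip a w / ip a a.
  by rewrite /t conjcM conjc_inv ipJ -ipC.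
have h := ip_ge0' (w - t *: a).
rewrite !ipBl !ipBr !ipZl !ipZr tJ in h.
have h2 := mulr_ge0 (ltW aapos) h.
have E : ip a a * (ip w w - ip a w / ip a a * ip w a - (t * ip a w - t * (ip a w / ip a a * ip a a)))
   = ip a a * ip w w - ip a w * ip w a.
  rewrite /t. field. exact: aa0.
rewrite E subr_ge0 in h2.
by rewrite /nrm2.
Qed.


Lemma orth_lim c w :
  (forall e : R[i], 0 < e -> exists b, nrm2 ip (b - c) < e /\ ip b w = 0) -> ip c w = 0.
Proof.
move=> h; have [//|a0] := eqVneq (ip c w) 0.
have w0 : w != 0.
  by apply/negP => /eqP w0; rewrite w0 ip0r eqxx in a0.
have ww0 : ip w w != 0 by apply/negP => /eqP /ip_eq0 /eqP; rewrite (negPf w0).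
have wwp : 0 < ip w w by rewrite lt_def ww0 ip_ge0'.
have aJ : 0 < ip c w * conjc (ip c w).
  by rewrite lt_def mulf_neq0 ?conjc_eq0 // mulcJ_ge0.
have ep : 0 < ip c w * conjc (ip c w) / ip w w by rewrite divr_gt0.
have [b [hb1 hb2]] := h _ ep.
have cs := CS (c - b) w.
rewrite [ip w _]ipC ipBl hb2 subr0 /nrm2 in cs.
have : ip (c - b) (c - b) * ip w w < ip c w * conjc (ip c w).
  rewrite -[X in _ < X](divfK ww0) ltr_pM2r //.
  by have := hb1; rewrite nrm2_subC.
by move=> /(le_lt_trans cs); rewrite ltxx.
Qed.

Lemma ip_span x (s : seq H) (c : nat -> R[i]) :
  (forall i, (i < size s)%N -> ip x s`_i = 0) ->
  ip x (\sum_(k < size s) c k *: s`_k) = 0.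
Proof.
move=> h; rewrite (big_morph (ip x) (ipDr x) (ip0r x)).
by apply: big1 => k _; rewrite ipZr h ?mulr0.
Qed.

Lemma ip_suml m (F : 'I_m -> H) y : ip (\sum_(k < m) F k) y = \sum_(k < m) ip (F k) y.
Proof. exact: (big_morph (ip^~ y) (fun a b => ipDl a b y) (ip0l y)). Qed.

End Hil.
Section Peval.
Variables (R : realType) (H : lmodType R[i]) (T : H -> H).
Hypothesis hT : lin T.

Definition peval (p : {poly R[i]}) (y : H) := \sum_(i < size p) p`_i *: iter i T y.

Lemma peval_widen (p : {poly R[i]}) (y : H) m : (size p <= m)%N ->
  peval p y = \sum_(i < m) p`_i *: iter i T y.
Proof.
elim: m => [|m IH] hs.
  by move: hs; rewrite leqn0 /peval => /eqP ->.
move: hs; rewrite leq_eqVlt => /orP [/eqP <- // | hs'].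
by rewrite big_ord_recr /= -IH // nth_default // scale0r addr0.
Qed.

Lemma peval0 (y : H) : peval 0 y = 0.
Proof. by rewrite /peval size_poly0 big_ord0. Qed.

Lemma peval_add (p q : {poly R[i]}) (y : H) : peval (p + q) y = peval p y + peval q y.
Proof.
set m := maxn (size p) (size q).
rewrite (@peval_widen (p + q) y m) ?size_polyD //.
rewrite (@peval_widen p y m) ?leq_maxl // (@peval_widen q y m) ?leq_maxr //.
by rewrite -big_split /=; apply: eq_bigr => i _; rewrite coefD scalerDl.
Qed.

Lemma peval_CM (c : R[i]) (q : {poly R[i]}) (y : H) : peval (c%:P * q) y = c *: peval q y.
Proof.
rewrite mul_polyC (@peval_widen (c *: q) y (size q)) ?size_scale_leq //.
rewrite /peval scaler_sumr; apply: eq_bigr => i _.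
by rewrite coefZ scalerA.
Qed.

Lemma peval_XM (q : {poly R[i]}) (y : H) : peval ('X * q) y = T (peval q y).
Proof.
have hs : (size (('X * q)%R) <= (size q).+1)%N.
  by apply: leq_trans (size_polyMleq _ _) _; rewrite size_polyX.
rewrite (peval_widen y hs) big_ord_recl coefXM /= scale0r add0r.
rewrite /peval (lin_sum hT); apply: eq_bigr => i _.
by rewrite coefXM /= (linZ hT).
Qed.

Lemma peval_comm (p : {poly R[i]}) (y : H) : peval p (T y) = T (peval p y).
Proof.
rewrite /peval (lin_sum hT); apply: eq_bigr => i _.
by rewrite (linZ hT) -iterSr.
Qed.

Lemma peval1 (y : H) : peval 1 y = y.
Proof. by rewrite /peval size_poly1 big_ord1 coef1 /= scale1r. Qed.

Lemma peval_C (c : R[i]) (y : H) : peval c%:P y = c *: y.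
Proof. by rewrite -[c%:P]mulr1 peval_CM peval1. Qed.

Lemma peval_X (y : H) : peval 'X y = T y.
Proof. by rewrite -['X]mulr1 peval_XM peval1. Qed.

Lemma peval_mul (p q : {poly R[i]}) (y : H) : peval (p * q) y = peval p (peval q y).
Proof.
move: q y; elim/poly_ind: p => [|p c IH] q y.
  by rewrite mul0r !peval0.
rewrite mulrDl -mulrA peval_add IH peval_XM peval_CM.
by rewrite peval_add mulrC peval_XM peval_C peval_comm.
Qed.

Lemma peval_lin (p : {poly R[i]}) : lin (peval p).
Proof.
move=> a x y; rewrite /peval scaler_sumr -big_split /=.
apply: eq_bigr => i _.
by rewrite (lin_iter i hT) scalerDr !scalerA mulrC.
Qed.

Lemma peval_Xn m (y : H) : peval ('X^m) y = iter m T y.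
Proof.
elim: m => [|m IH]; first by rewrite expr0 peval1.
by rewrite exprS peval_XM IH.
Qed.

Lemma peval_pres (P : H -> Prop) :
  P 0 -> (forall x y, P x -> P y -> P (x + y)) ->
  (forall a x, P x -> P (a *: x)) -> (forall x, P x -> P (T x)) ->
  forall (p : {poly R[i]}) y, P y -> P (peval p y).
Proof.
move=> P0 PD PZ PT p y Py; rewrite /peval.
apply: (big_ind P) => // i _; apply: PZ.
by elim: (nat_of_ord i) => //= k IH; apply: PT.
Qed.

Lemma eig_factor (r : seq R[i]) (x : H) : x != 0 -> (forall z, z \in r -> z != 0) ->
  peval (\prod_(z <- r) ('X - z%:P)) x = 0 ->
  exists lam : R[i], lam != 0 /\ exists v, v != 0 /\ T v = lam *: v.
Proof.
elim: r => [|z r IH] hx hr.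
  by rewrite big_nil peval1 => h; rewrite h eqxx in hx.
rewrite big_cons peval_mul.
set w := peval _ x.
have [w0|wn0] := eqVneq w 0.
  have hr' : forall u, u \in r -> u != 0.
    by move=> u hu; apply: hr; rewrite inE hu orbT.
  by move=> _; apply: IH.
rewrite peval_add peval_X -polyCN peval_C => /eqP.
rewrite scaleNr subr_eq0 => /eqP hw.
exists z; split; first by apply: hr; rewrite inE eqxx.
by exists w.
Qed.

End Peval.
Section Main.
Variables (R : realType) (H : lmodType R[i]) (ip : H -> H -> R[i]).
Variables (T Ts DT DTs : H -> H).
Hypothesis hH : hs_hilbert ip.
Hypothesis hC : hs_contraction ip T.
Hypothesis hA : is_adjoint ip T Ts.
Hypothesis hDT : is_pos_sqrt ip DT (fun x => x - Ts (T x)).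
Hypothesis hDTs : is_pos_sqrt ip DTs (fun x => x - T (Ts x)).
Hypothesis hsub : forall x, closure_range ip DT x -> closure_range ip DTs x.
Variable s : seq H.
Hypothesis hs : forall x, closure_range ip DTs x -> in_span s x.

Lemma linT : lin T. Proof. by case: hC => [[]]. Qed.
Lemma linDT : lin DT. Proof. by case: hDT => [[[]]]. Qed.
Lemma linDTs : lin DTs. Proof. by case: hDTs => [[[]]]. Qed.
Lemma adjDT : is_adjoint ip DT DT. Proof. by case: hDT => [[_ []]]. Qed.
Lemma adjDTs : is_adjoint ip DTs DTs. Proof. by case: hDTs => [[_ []]]. Qed.
Lemma sqDT x : DT (DT x) = x - Ts (T x). Proof. by case: hDT => _ ->. Qed.
Lemma sqDTs x : DTs (DTs x) = x - T (Ts x). Proof. by case: hDTs => _ ->. Qed.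
Lemma contrT x : nrm2 ip (T x) <= nrm2 ip x. Proof. by case: hC => _ ->. Qed.

Lemma eq_ipr u v : (forall z, ip z u = ip z v) -> u = v.
Proof.
move=> h; apply/eqP; rewrite -subr_eq0; apply/eqP; apply: (eq0_ipr hH) => z.
by rewrite (ipBr hH) h subrr.
Qed.

Lemma linTs : lin Ts.
Proof.
move=> a x y; apply: eq_ipr => z.
by rewrite -hA !(ipDr hH) !(ipZr hH) -!hA.
Qed.

Lemma contr_iter j x : nrm2 ip (iter j T x) <= nrm2 ip x.
Proof. elim: j => //= j IH; exact: le_trans (contrT _) IH. Qed.

Definition N x := DTs x = 0.

Lemma N_TTs x : N x -> T (Ts x) = x.
Proof.
move=> hx; have := sqDTs x; rewrite hx (lin0 linDTs) => /esym /eqP.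
by rewrite subr_eq0 => /eqP <-.
Qed.

Lemma N_orth x : N x -> forall z, ip x (DTs z) = 0.
Proof. by move=> hx z; rewrite -adjDTs hx (ip0l hH). Qed.

Lemma TTs_N x : T (Ts x) = x -> N x.
Proof.
move=> hx; apply: (ip_eq0 hH).
by rewrite adjDTs sqDTs hx subrr (ip0r hH).
Qed.

Lemma clos_self (S : H -> H) z : closure_range ip S (S z).
Proof. by move=> e he; exists z; rewrite subrr /nrm2 (ip0l hH). Qed.

Lemma N_TsT x : N x -> Ts (T x) = x.
Proof.
move=> hx.
have hk : forall k, closure_range ip DTs k -> ip k x = 0.
  move=> k hk; apply: (orth_lim hH) => e he.
  have [z hz] := hk e he; exists (DTs z); split => //.
  by rewrite (ipC hH) N_orth // conjc0.
have hDx : DT x = 0.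
  apply: (eq0_ipl hH) => z.
  by rewrite adjDT (ipC hH) hk ?conjc0 //; apply: hsub; apply: clos_self.
have := sqDT x; rewrite hDx (lin0 linDT) => /esym /eqP.
by rewrite subr_eq0 => /eqP <-.
Qed.

Lemma N_T x : N x -> N (T x).
Proof. by move=> hx; apply: TTs_N; rewrite N_TsT. Qed.

Lemma N_iso x : N x -> nrm2 ip (T x) = nrm2 ip x.
Proof. by move=> hx; rewrite /nrm2 hA N_TsT. Qed.

Lemma N0 : N 0. Proof. exact: (lin0 linDTs). Qed.
Lemma ND x y : N x -> N y -> N (x + y).
Proof. by rewrite /N (linD linDTs) => -> ->; rewrite addr0. Qed.
Lemma NZ a x : N x -> N (a *: x).
Proof. by rewrite /N (linZ linDTs) => ->; rewrite scaler0. Qed.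
Lemma NB x y : N x -> N y -> N (x - y).
Proof. by rewrite /N (linB linDTs) => -> ->; rewrite subr0. Qed.

Lemma N_iter j x : N x -> N (iter j T x).
Proof. by elim: j => //= j IH hx; apply: N_T; apply: IH. Qed.

Lemma N_iso_iter j x : N x -> nrm2 ip (iter j T x) = nrm2 ip x.
Proof.
elim: j => //= j IH hx; rewrite N_iso ?IH //; exact: N_iter.
Qed.

Lemma N_lim u l : (forall k, N (u k)) -> seq_converges ip u l -> N l.
Proof.
move=> hu hl; apply: (eq0_ipl hH) => z; rewrite adjDTs.
apply: (orth_lim hH) => e he.
have [K hK] := hl e he; exists (u K); split; first exact: hK.
exact: N_orth.
Qed.

Lemma Z_N x : (forall i, (i < size s)%N -> ip x s`_i = 0) -> N x.
Proof.
move=> hx; apply: (eq0_ipl hH) => z; rewrite adjDTs.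
have [c ->] := hs (clos_self DTs z).
by apply: (ip_span hH).
Qed.

Lemma quarter x y (e : R[i]) : nrm2 ip x < e / 4%:R -> nrm2 ip y < e / 4%:R ->
  nrm2 ip (x + y) < e.
Proof.
move=> hx hy; apply: le_lt_trans (par hH x y) _.
have h2 : (0 : R[i]) < 2%:R by rewrite ltr0n.
have hx2 : 2%:R * nrm2 ip x < 2%:R * (e / 4%:R) by rewrite ltr_pM2l.
have hy2 : 2%:R * nrm2 ip y < 2%:R * (e / 4%:R) by rewrite ltr_pM2l.
have := ltrD hx2 hy2.
suff -> : 2%:R * (e / 4%:R) + 2%:R * (e / 4%:R) = e by [].
by field.
Qed.

Definition M x := forall j, exists a, N a /\ x = iter j T a.

Lemma M_N x : M x -> N x.
Proof. by move=> h; have [a [ha ->]] := h 0%N. Qed.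

Lemma M_lim u l : (forall k, M (u k)) -> seq_converges ip u l -> M l.
Proof.
move=> hu hl j.
pose a k := proj1_sig (constructive_indefinite_description _ (hu k j)).
have ha k : N (a k) /\ u k = iter j T (a k).
  exact: (proj2_sig (constructive_indefinite_description _ (hu k j))).
have hlin := lin_iter j linT.
have hcau : cauchy_seq ip a.
  move=> e he; have e4 : 0 < e / 4%:R by rewrite divr_gt0 // ltr0n.
  have [K hK] := hl _ e4; exists K => m n hm hn.
  have [Nm um] := ha m; have [Nn un] := ha n.
  rewrite -(N_iso_iter j (NB Nm Nn)) (linB hlin) -um -un.
  have -> : u m - u n = (u m - l) + (l - u n) by rewrite addrA subrK.
  apply: quarter; first by apply: hK.
  by rewrite (nrm2_subC hH); apply: hK.
have [a0 ha0] := ip_complete hH hcau.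
have Na0 : N a0 := N_lim (fun k => proj1 (ha k)) ha0.
exists a0; split => //.
apply: subr0_eq; apply: (small0 hH) => e he.
have e4 : 0 < e / 4%:R by rewrite divr_gt0 // ltr0n.
have [K1 hK1] := hl _ e4; have [K2 hK2] := ha0 _ e4.
have [Nk uk] := ha (maxn K1 K2).
have -> : l - iter j T a0 = (l - u (maxn K1 K2)) + iter j T (a (maxn K1 K2) - a0).
  by rewrite (linB hlin) -uk addrA subrK.
apply: quarter.
  by rewrite (nrm2_subC hH); apply: hK1; rewrite leq_maxl.
by apply: le_lt_trans (contr_iter _ _) _; apply: hK2; rewrite leq_maxr.
Qed.

Lemma M_closed : closed_subspace ip M.
Proof.
split.
- move=> j; exists 0; split; first exact: N0.
  by rewrite (lin0 (lin_iter j linT)).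
- move=> x y hx hy j.
  have [a [ha ->]] := hx j; have [b [hb ->]] := hy j.
  by exists (a + b); split; [exact: ND | rewrite (linD (lin_iter j linT))].
- move=> c x hx j; have [a [ha ->]] := hx j.
  by exists (c *: a); split; [exact: NZ | rewrite (linZ (lin_iter j linT))].
- exact: M_lim.
Qed.

Lemma M_T x : M x -> M (T x).
Proof.
move=> hx j; have [a [ha ->]] := hx j.
by exists (T a); split; [exact: N_T | rewrite -iterSr].
Qed.

Lemma M_Ts x : M x -> M (Ts x).
Proof.
move=> hx j; have [a [ha ->]] := hx j.+1.
exists a; split => //=; rewrite N_TsT //; exact: N_iter.
Qed.

Hypothesis hcnu : completely_non_unitary ip T Ts.

Lemma M_zero x : M x -> x = 0.
Proof.
apply: (hcnu (M := M)).
- split; first exact: M_closed.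
  by split; [exact: M_T | exact: M_Ts].
split.
- by move=> y hy; apply: N_iso; apply: M_N.
- move=> y hy; exists (Ts y); split; first exact: M_Ts.
  by apply: N_TTs; apply: M_N.
Qed.


Lemma PD y : exists p : {poly R[i]}, p != 0 /\ (size p <= (size s).+1)%N /\ N (peval T p y).
Proof.
pose A : 'M[R[i]]_((size s).+1, size s) := \matrix_(j, i) ip (iter j T y) s`_i.
have nf : ~~ row_free A.
  rewrite /row_free; apply/negP => /eqP hr.
  by have := rank_leq_col A; rewrite hr ltnn.
have [v [hv0 hvA]] : exists v : 'rV[R[i]]_(size s).+1, v != 0 /\ v *m A = 0.
  apply: NNPP => hne; move/negP: nf; apply; apply: inj_row_free => v hv.
  case: (eqVneq v 0) => // hv0; exfalso; apply: hne; by exists v.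
pose p := \poly_(j < (size s).+1) v 0 (inord j).
exists p; split.
  have /rV0Pn [j hj] := hv0.
  have hpj : p`_j = v 0 j by rewrite coef_poly ltn_ord inord_val.
  by apply/eqP => hp0; rewrite -hpj hp0 coef0 eqxx in hj.
split; first exact: size_poly.
apply: Z_N => i hi.
rewrite (peval_widen T y (size_poly _ _)) (ip_suml hH).
have := congr1 (fun B : 'M[R[i]]_(1, size s) => B 0 (Ordinal hi)) hvA; rewrite !mxE => h; apply: (etrans _ h).
by apply: eq_bigr => j _; rewrite (ipZl hH) coef_poly ltn_ord inord_val mxE.
Qed.

Lemma peval_N (p : {poly R[i]}) y : N y -> N (peval T p y).
Proof. exact: (peval_pres N0 ND NZ N_T). Qed.

Lemma Fit y m : N (iter m T y) -> N (iter (size s) T y).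
Proof.
move=> hm.
have [p [hp0 [hps hpN]]] := PD y.
case: (multiplicity_XsubC p 0) => j0 [q hq hpq].
rewrite hp0 /= in hq; rewrite polyC0 subr0 in hpq.
have q0 : q != 0 by apply/eqP => q0; rewrite hpq q0 mul0r eqxx in hp0.
have hX : 'X^j0 != 0 :> {poly R[i]} by rewrite -size_poly_eq0 size_polyXn.
have hj0 : (j0 <= size s)%N.
  move: hps; rewrite hpq size_mul // size_polyXn addnS /=.
  move: (size_poly_gt0 q); rewrite q0 => hsq h; rewrite -ltnS; apply: leq_trans h; by rewrite -{1}(add0n j0) ltn_add2r.
set w := iter j0 T y.
have hw : N w.
  have hcop : coprimep ('X^m) q.
    by apply: coprimep_expl; rewrite coprimep_sym coprimepX.
  have /Bezout_coprimepP [[u v] /= huv] := hcop.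
  have /eqpP [[c1 c2] /= /andP [c10 c20] hc] := huv.
  have key : N (peval T (u * 'X^m + v * q) w).
    rewrite (peval_add T) !(peval_mul linT) (peval_Xn linT).
    apply: ND; apply: peval_N.
      by rewrite /w -iterD addnC iterD; apply: N_iter.
    by rewrite /w -(peval_Xn linT) -(peval_mul linT) -hpq.
  have := NZ c1 key.
  rewrite -(peval_CM T) mul_polyC hc -mul_polyC (peval_CM T) (peval1 T) => h.
  by have := NZ (c2^-1) h; rewrite scalerA mulVf // scale1r.
by rewrite -(subnK hj0) iterD; apply: N_iter.
Qed.

Definition W x := forall m, (1 <= m)%N -> exists y, x = iter m T y.

Lemma StepA x : W x -> N x -> M x.
Proof.
move=> hW hN j; case: j => [|j]; first by exists x.
have [y hy] : exists y, x = iter (size s + j.+1)%N T y by apply: hW; rewrite addnS.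
have hn : N (iter (size s) T y) by apply: (@Fit y (size s + j.+1)%N); rewrite -hy.
by exists (iter (size s) T y); split => //; rewrite hy addnC iterD.
Qed.

Lemma W_pres (p : {poly R[i]}) x : W x -> W (peval T p x).
Proof.
apply: (peval_pres (P := W)).
- by move=> m hm; exists 0; rewrite (lin0 (lin_iter m linT)).
- move=> a b ha hb m hm; have [ya ->] := ha m hm; have [yb ->] := hb m hm.
  by exists (ya + yb); rewrite (linD (lin_iter m linT)).
- move=> c a ha m hm; have [ya ->] := ha m hm.
  by exists (c *: ya); rewrite (linZ (lin_iter m linT)).
- move=> a ha m hm; have [ya ->] := ha m hm.
  by exists (T ya); rewrite -iterSr.
Qed.

Lemma hard : ~ has_nonzero_eigenvalue T -> analytic T.
Proof.
move=> hne x hx.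
have [//|xn0] := eqVneq x 0.
exfalso; apply: hne.
have [y hy] := hx (size s).+1 isT.
have [p [hp0 [hps hpN]]] := PD y.
case: (multiplicity_XsubC p 0) => j0 [q hq hpq].
rewrite hp0 /= in hq; rewrite polyC0 subr0 in hpq.
have q0 : q != 0 by apply/eqP => q0; rewrite hpq q0 mul0r eqxx in hp0.
have hX : 'X^j0 != 0 :> {poly R[i]} by rewrite -size_poly_eq0 size_polyXn.
have hj0 : (j0 <= (size s).+1)%N.
  move: hps; rewrite hpq size_mul // size_polyXn addnS /=.
  move: (size_poly_gt0 q); rewrite q0 => hsq h; apply: ltnW; apply: leq_trans h; by rewrite -{1}(add0n j0) ltn_add2r.
have hz : peval T q x = 0.
  apply: M_zero; apply: StepA; first exact: W_pres.
  rewrite hy -(peval_Xn linT) -(peval_mul linT).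
  have -> : q * 'X^((size s).+1) = 'X^((size s).+1 - j0) * p.
    by rewrite hpq mulrCA -exprD subnK.
  by rewrite (peval_mul linT) (peval_Xn linT); apply: N_iter.
have [r hr] := closed_field_poly_normal q.
have lc0 : lead_coef q != 0 by rewrite lead_coef_eq0.
move: hz; rewrite hr -mul_polyC (peval_CM T) => /eqP.
rewrite scaler_eq0 (negPf lc0) /= => /eqP hz.
apply: (eig_factor linT xn0 _ hz) => z hz'.
apply/eqP => z0; move: hq; rewrite hr rootZ // root_prod_XsubC -z0 hz'.
by [].
Qed.

Lemma easy : analytic T -> ~ has_nonzero_eigenvalue T.
Proof.
move=> han [lam [hl [v [hv hTv]]]].
have hit : forall m, iter m T v = lam ^+ m *: v.
  elim=> [|m IH] /=; first by rewrite expr0 scale1r.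
  by rewrite IH (linZ linT) hTv scalerA exprS mulrC.
apply: (negP hv); apply/eqP; apply: han => m hm.
exists (lam ^- m *: v).
by rewrite (linZ (lin_iter m linT)) hit scalerA mulVf ?scale1r // expf_neq0.
Qed.

End Main.

Theorem corollary4p4 (R : realType) (H : lmodType R[i]) (ip : H -> H -> R[i])
    (T Ts DT DTs : H -> H) :
  hs_hilbert ip -> hs_separable ip -> hs_infinite_dim H ->
  hs_contraction ip T -> is_adjoint ip T Ts ->
  is_pos_sqrt ip DT (fun x => x - Ts (T x)) ->
  is_pos_sqrt ip DTs (fun x => x - T (Ts x)) ->
  completely_non_unitary ip T Ts ->
  ~ hs_isometry ip T ->
  (forall x, closure_range ip DT x -> closure_range ip DTs x) ->
  hs_finite_dim (closure_range ip DTs) ->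
  (analytic T <-> ~ has_nonzero_eigenvalue T).
Proof.
move=> hH _ _ hC hA hDT hDTs hcnu _ hsub [s hs].
split; first exact: (easy hC).
exact: (hard hH hC hA hDT hDTs hsub hs hcnu).
Qed.
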